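(* Let $\mathbb F$ have characteristic $0$, let $d\ge0$, $M=\{\mathbf a\in\mathbb N^n:|\mathbf a|_1\le d\}$, let $B\subseteq M$ be nonempty and $A=\textsc{Find}(B,n)$. Then $A\subseteq M$, $|A|=|B|$, and the submatrix $T_{A,B}$ of $T$ is nonsingular.
   Context: $T$ is the matrix with rows and columns indexed by $M$ and entries $T_{\mathbf a,\mathbf b}=\binom{\mathbf b}{\mathbf a}:=\prod_{i=1}^n\binom{b_i}{a_i}$ (with $\binom{b}{a}=0$ if $a>b$); $T_{A,B}$ is its restriction to rows $A$ and columns $B$. The procedure $\textsc{Find}(B,n)$ for finite nonempty $B\subseteq\mathbb N^n$: if $n=1$, return $\{0,\dots,|B|-1\}$; otherwise let $\pi_n$ project onto the first $n-1$ coordinates, $\ell=\max_{\mathbf u\in\pi_n(B)}|\pi_n^{-1}(\mathbf u)\cap B|$, $F_i=\{\mathbf u\in\pi_n(B):|\pi_n^{-1}(\mathbf u)\cap B|\ge i\}$ for $i\in[\ell]$, $S_i=\textsc{Find}(F_i,n-1)$, and return $\bigcup_{i=1}^\ell S_i\times\{i-1\}$. *)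

(* Defs.v *)
From HB Require Import structures.
From mathcomp Require Import all_boot all_order all_algebra.
Set Implicit Arguments. Unset Strict Implicit. Unset Printing Implicit Defensive.
Import GRing.Theory.

(* Points of N^n are represented as lists of naturals of length n;
   finite subsets of N^n as duplicate-free lists of such points. *)

Definition inM (n d : nat) (a : seq nat) : bool := (size a == n) && (sumn a <= d).

Definition binomv (a b : seq nat) : nat := \prod_(p <- zip a b) 'C(p.2, p.1).

(* The procedure Find(B, n). pi_n = take (n-1).  Find is only meaningful
   for n >= 1; the n = 0 branch is an arbitrary placeholder. *)
Fixpoint Find (n : nat) (B : seq (seq nat)) {struct n} : seq (seq nat) :=
  match n with
  | 0 => [::]
  | 1 => [seq [:: i] | i <- iota 0 (size (undup B))]
  | S ((S _) as m) =>
      let P := undup [seq take m b | b <- B] in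
      let cnt u := count (fun b => take m b == u) (undup B) in
      let l := \max_(u <- P) cnt u in
      flatten [seq [seq rcons s i.-1 | s <- Find m [seq u <- P | i <= cnt u]]
              | i <- iota 1 l]
  end.

(* The square matrix T_{A,B} (rows indexed by A, columns by B, in list order),
   of size |B| x |B|; used together with size A = size B. *)
Definition Tsub (F : nzRingType) (A B : seq (seq nat)) : 'M[F]_(size B) :=
  \matrix_(i < size B, j < size B) ((binomv (nth [::] A i) (nth [::] B j))%:R)%R.

(* Main.v *)
Require Import Defs.
From HB Require Import structures.
From mathcomp Require Import all_boot all_order all_algebra.
From mathcomp Require Import ring zify.
Set Implicit Arguments. Unset Strict Implicit. Unset Printing Implicit Defensive.
Import GRing.Theory.
Local Open Scope ring_scope.

Section Char0.
Variables (F : fieldType) (charF0 : [pchar F] =i pred0).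

Lemma natr_neq0 k : (0 < k)%N -> (k%:R : F) != 0.
Proof. by move=> k0; rewrite ((pcharf0P F).1 charF0) -lt0n. Qed.

Lemma natr_inj0 (t s : nat) : (t%:R == s%:R :> F) = (t == s).
Proof.
case: (ltngtP t s) => h.
- apply/negbTE; rewrite eq_sym -subr_eq0 -natrB ?(ltnW h) //.
  by apply: natr_neq0; rewrite subn_gt0.
- apply/negbTE; rewrite -subr_eq0 -natrB ?(ltnW h) //.
  by apply: natr_neq0; rewrite subn_gt0.
- by rewrite h !eqxx.
Qed.

Lemma bin_id (t j : nat) : (t * 'C(t, j) = j.+1 * 'C(t, j.+1) + j * 'C(t, j))%N.
Proof.
rewrite mul_bin_left; case: (leqP j t) => h.
  by rewrite -mulnDl subnK.
by rewrite bin_small // !muln0.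
Qed.

Lemma vand (ts : seq nat) (c : nat -> F) :
  uniq ts -> (forall j, (j < size ts)%N -> \sum_(t <- ts) c t * ('C(t, j))%:R = 0) ->
  forall t, t \in ts -> c t = 0.
Proof.
elim: ts c => [|s0 ts IH] c //= /andP[s0n Hu] H.
pose c' t := c t * (t%:R - s0%:R).
have H' : forall t, t \in ts -> c' t = 0.
  apply: IH => // j hj.
  have : \sum_(t <- s0 :: ts) c' t * ('C(t, j))%:R = 0.
    transitivity (\sum_(t <- s0 :: ts) ((j.+1)%:R * (c t * ('C(t, j.+1))%:R)
         + (j%:R - s0%:R) * (c t * ('C(t, j))%:R))).
      apply: eq_bigr => t _; rewrite /c'.
      have e : (t%:R * ('C(t, j))%:R : F) = (j.+1)%:R * ('C(t, j.+1))%:R + j%:R * ('C(t, j))%:R.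
        by rewrite -!natrM -natrD bin_id.
      have -> : c t * (t%:R - s0%:R) * ('C(t, j))%:R = c t * (t%:R * ('C(t, j))%:R) - c t * s0%:R * ('C(t, j))%:R by ring.
      rewrite e; ring.
    by rewrite big_split /= -!mulr_sumr !H ?mulr0 ?addr0 //= ltnW.
  by rewrite big_cons /c' subrr mulr0 mul0r add0r.
move=> t; rewrite inE => /orP[/eqP ->|tin].
  have := H 0%N isT; rewrite big_cons bin0 mulr1.
  rewrite big_seq (eq_bigr (fun _ => 0)) ?big1 ?addr0 // => t' t'in.
  have := H' t' t'in; rewrite /c' => /eqP; rewrite mulf_eq0 subr_eq0 natr_inj0.
  by case/orP => [/eqP -> | /eqP e]; [rewrite mul0r | move: s0n; rewrite -e t'in].
have := H' t tin; rewrite /c' => /eqP; rewrite mulf_eq0 subr_eq0 natr_inj0.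
case/orP => [/eqP -> // | /eqP e]; by move: s0n; rewrite -e tin.
Qed.
End Char0.

Lemma big_pred1_seq (R : Type) (idx : R) (op : Monoid.com_law idx) (U : eqType)
   (r : seq U) (x : U) (g : R) :
  uniq r -> x \in r -> \big[op/idx]_(u <- r | x == u) g = g.
Proof.
move=> ur xr; rewrite big_mkcond (bigD1_seq x) //= eqxx big1 ?Monoid.mulm1 // => u.
by rewrite eq_sym => /negbTE ->.
Qed.

Lemma part_big (R : Type) (idx : R) (op : Monoid.com_law idx) (T U : eqType)
  (f : T -> U) (G : T -> R) (B : seq T) :
  \big[op/idx]_(b <- B) G b =
  \big[op/idx]_(u <- undup (map f B)) \big[op/idx]_(b <- B | f b == u) G b.
Proof.
under [RHS]eq_bigr do rewrite big_mkcond.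
rewrite exchange_big /=; apply: eq_big_seq => b bB.
rewrite -big_mkcond big_pred1_seq ?undup_uniq // mem_undup; exact: map_f.
Qed.

Lemma uniq_flatten_tag (S T : eqType) (g : T -> S) (s : seq S) (blk : S -> seq T) :
  uniq s -> (forall x, x \in s -> uniq (blk x)) ->
  (forall x y, x \in s -> y \in blk x -> g y = x) ->
  uniq (flatten (map blk s)).
Proof.
elim: s => [|x s IH] //= /andP[xs us] ub hg.
rewrite cat_uniq ub ?mem_head // IH //; last first.
  by move=> x' y x's; apply: hg; rewrite inE x's orbT.
  by move=> x' x's; apply: ub; rewrite inE x's orbT.
rewrite andbT; apply/hasPn => y /flatten_mapP [x' x's yx'].
apply/negP => yx; move: xs.
by rewrite -(hg x y (mem_head _ _) yx) (hg x' y) ?x's // inE x's orbT.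
Qed.

Lemma Find_nil n : Find n [::] = [::].
Proof. by case: n => [|[|n]] //=; rewrite big_nil. Qed.

Lemma recon k (b : seq nat) : size b = k.+1 -> b = rcons (take k b) (nth 0%N b k).
Proof. by move=> sb; rewrite -take_nth ?sb // -sb take_size. Qed.

Lemma count_iota (c l : nat) : (c <= l)%N -> count (fun i => i <= c)%N (iota 1 l) = c.
Proof.
move=> cl; rewrite -(subnKC cl) iotaD count_cat.
rewrite (eq_in_count (a2 := predT)) ?count_predT ?size_iota; last first.
  by move=> i; rewrite mem_iota /= => /andP [_]; rewrite add1n ltnS.
rewrite (eq_in_count (a2 := pred0)) ?count_pred0 ?addn0 //.
move=> i; rewrite mem_iota /= => /andP [h _]; apply/negbTE; rewrite -ltnNge.
by move: h; rewrite add1n.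
Qed.

Lemma binomv_rcons (s u : seq nat) j t :
  size s = size u -> binomv (rcons s j) (rcons u t) = (binomv s u * 'C(t, j))%N.
Proof. by move=> e; rewrite /binomv zip_rcons // big_rcons. Qed.
Definition Ind (F : fieldType) (A B : seq (seq nat)) :=
  forall c : seq nat -> F,
    (forall a, a \in A -> \sum_(b <- B) c b * (binomv a b)%:R = 0) ->
    forall b, b \in B -> c b = 0.


Definition Q (F : fieldType) (n : nat) := forall d (B : seq (seq nat)), uniq B -> all (inM n d) B ->
  [/\ all (inM n d) (Find n B), uniq (Find n B), size (Find n B) = size B & Ind F (Find n B) B].

Section Step.
Variables (F : fieldType) (charF0 : [pchar F] =i pred0).
Variables (k d : nat) (B : seq (seq nat)) (uB : uniq B) (inB : all (inM k.+1 d) B) (IHk : Q F k).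
Let P := undup [seq take k b | b <- B].
Let cnt u := count (fun b => take k b == u) B.
Let l := (\max_(u <- P) cnt u)%N.
Let Fi i := [seq u <- P | (i <= cnt u)%N].
Let A := flatten [seq [seq rcons s i.-1 | s <- Find k (Fi i)] | i <- iota 1 l].
Let fib u := [seq nth 0%N b k | b <- B & take k b == u].

Lemma sizeB b : b \in B -> size b = k.+1.
Proof. by move=> /(allP inB) /andP [/eqP]. Qed.
Lemma sumB b : b \in B -> (sumn b <= d)%N.
Proof. by move=> /(allP inB) /andP []. Qed.
Lemma reconB b : b \in B -> b = rcons (take k b) (nth 0%N b k).
Proof. by move=> /sizeB /recon. Qed.

Lemma fib_uniq u : uniq (fib u).
Proof.
rewrite map_inj_in_uniq ?filter_uniq // => b1 b2.
rewrite !mem_filter => /andP [/eqP e1 b1B] /andP [/eqP e2 b2B] e.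
by rewrite (reconB b1B) (reconB b2B) e1 e2 e.
Qed.

Lemma size_fib u : size (fib u) = cnt u.
Proof. by rewrite size_map size_filter. Qed.

Lemma cnt_le_l u : u \in P -> (cnt u <= l)%N.
Proof. by move=> uP; apply: (leq_bigmax_seq u). Qed.

Lemma fib_mem u t : t \in fib u -> rcons u t \in B.
Proof.
move=> /mapP [b]; rewrite mem_filter => /andP [/eqP e bB] ->.
by rewrite -e -reconB.
Qed.

Lemma big_t u i : (0 < i)%N -> (i <= cnt u)%N -> exists2 t, t \in fib u & (i.-1 <= t)%N.
Proof.
move=> i0 ic; case: (boolP (has (fun t => i.-1 <= t)%N (fib u))) => [/hasP [t ? ?]|/hasPn H].
  by exists t.
have : (size (fib u) <= size (iota 0 i.-1))%N.
  apply: uniq_leq_size (fib_uniq u) _ => t tf.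
  by rewrite mem_iota add0n /= ltnNge H.
rewrite size_iota size_fib; lia.
Qed.

Lemma Fi_bound i u : (0 < i)%N -> u \in Fi i -> size u = k /\ (sumn u + i.-1 <= d)%N.
Proof.
move=> i0; rewrite mem_filter mem_undup => /andP [ic /mapP [b bB eu]].
split; first by rewrite eu size_takel // sizeB.
have [t tf it] := big_t i0 ic.
have := sumB (fib_mem tf); rewrite sumn_rcons; lia.
Qed.

Lemma Fi_uniq i : uniq (Fi i).
Proof. by rewrite filter_uniq ?undup_uniq. Qed.

Lemma IHFi i : (0 < i)%N ->
  [/\ all (inM k (d - i.-1)) (Find k (Fi i)), uniq (Find k (Fi i)),
      size (Find k (Fi i)) = size (Fi i) & Ind F (Find k (Fi i)) (Fi i)].
Proof.
move=> i0; apply: IHk; first exact: Fi_uniq.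
apply/allP => u uF; have [su su'] := Fi_bound i0 uF.
rewrite /inM su eqxx /=; lia.
Qed.

Lemma memA a : a \in A -> exists i s, [/\ (0 < i <= l)%N, s \in Find k (Fi i) & a = rcons s i.-1].
Proof.
move=> /flatten_mapP [i]; rewrite mem_iota => /andP [i1 il] /mapP [s sF ->].
exists i, s; split => //; rewrite i1 /=; lia.
Qed.

Lemma A_in i s : (0 < i <= l)%N -> s \in Find k (Fi i) -> rcons s i.-1 \in A.
Proof.
move=> /andP [i0 il] sF; apply/flatten_mapP; exists i; last exact: map_f.
rewrite mem_iota i0 /=; lia.
Qed.

Lemma allA : all (inM k.+1 d) A.
Proof.
apply/allP => a /memA [i [s [/andP [i0 il] sF ->]]].
have [/allP hall _ _ _] := IHFi i0.
have /andP [/eqP ss sd] := hall s sF.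
case E: (Fi i) => [|u r]; first by move: sF; rewrite E Find_nil.
have : u \in Fi i by rewrite E mem_head.
move=> /(Fi_bound i0) [_ hu].
rewrite /inM size_rcons ss eqxx sumn_rcons /=; lia.
Qed.

Lemma uniqA : uniq A.
Proof.
apply: (uniq_flatten_tag (g := fun a => (last 0%N a).+1)); first exact: iota_uniq.
  move=> i; rewrite mem_iota => /andP [i0 _].
  by rewrite (map_inj_uniq (rcons_injl _)); have [] := IHFi i0.
move=> i y; rewrite mem_iota => /andP [i0 _] /mapP [s _ ->].
by rewrite last_rcons prednK.
Qed.

Lemma sizeA : size A = size B.
Proof.
rewrite size_flatten /shape -map_comp sumnE big_map.
rewrite big_seq (eq_bigr (fun i => count (fun u => i <= cnt u)%N P)); last first.
  move=> i; rewrite mem_iota => /andP [i0 _] /=; rewrite size_map.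
  by have [_ _ -> _] := IHFi i0; rewrite size_filter.
rewrite -big_seq.
under eq_bigr do rewrite -sum1_count.
under eq_bigr do rewrite big_mkcond.
rewrite exchange_big /=.
rewrite (eq_big_seq (fun u => cnt u)); last first.
  by move=> u uP; rewrite -big_mkcond sum1_count count_iota // cnt_le_l.
rewrite -sum1_size [RHS](part_big _ (fun b => take k b)).
by apply: eq_bigr => u _; rewrite sum1_count.
Qed.

Lemma IndA : Ind F A B.
Proof.
move=> c Hc.
pose h j u := \sum_(b <- B | take k b == u) c b * ('C(nth 0%N b k, j))%:R.
have key : forall s j, size s = k ->
    \sum_(b <- B) c b * (binomv (rcons s j) b)%:R = \sum_(u <- P) h j u * (binomv s u)%:R.
  move=> s j ss.
  rewrite [LHS](@part_big F 0 +%R _ _ (fun b => take k b)); apply: eq_bigr => u _.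
  rewrite /h mulr_suml big_seq_cond [RHS]big_seq_cond; apply: eq_bigr => b /andP [bB /eqP e].
  have eb := reconB bB.
  rewrite [X in binomv _ X]eb binomv_rcons ?e ?natrM ?mulrA //; last first.
    by rewrite -e size_takel ?ss // sizeB.
  by rewrite -!mulrA [X in _ * X]mulrC.
have FZ : forall u, (forall j, (j < cnt u)%N -> h j u = 0) ->
    forall b, b \in B -> take k b = u -> c b = 0.
  move=> u hu b bB e.
  have V := vand charF0 (fib_uniq u) (c := fun t => c (rcons u t)).
  rewrite (reconB bB) e; apply: V; last first.
    by apply/mapP; exists b; rewrite ?mem_filter ?e ?eqxx.
  move=> j; rewrite size_fib => jc; rewrite -[RHS](hu j jc) /h big_map big_filter.
  rewrite big_seq_cond [RHS]big_seq_cond; apply: eq_bigr => b' /andP [b'B /eqP e'].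
  by rewrite -e' -reconB.
have main : forall j, (j < l)%N -> forall u, u \in P -> h j u = 0.
  elim/ltn_ind => j IHj jl u uP.
  have hz : forall u, u \in P -> (cnt u <= j)%N -> h j u = 0.
    move=> u' u'P cj; rewrite /h big_seq_cond big1 // => b /andP [bB /eqP e].
    rewrite (FZ u') ?mul0r // => j' j'c; apply: IHj => //; lia.
  case: (leqP (cnt u) j) => cj; first exact: hz.
  have uF : u \in Fi j.+1 by rewrite mem_filter cj uP.
  have [hall _ _ HI] := IHFi (ltn0Sn j).
  apply: (HI (h j)) => // s sF.
  have /andP [/eqP ss _] := allP hall s sF.
  rewrite big_filter big_mkcond.
  rewrite (eq_big_seq (fun u => h j u * (binomv s u)%:R)); last first.
    move=> u' u'P; case: ifP => // /negbT; rewrite -ltnNge ltnS => cj'.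
    by rewrite hz ?mul0r.
  rewrite -key //; apply: Hc.
  by have := A_in (i := j.+1) (s := s); apply => //; rewrite ltn0Sn jl.
move=> b bB; apply: (FZ (take k b)) => // j jc.
have uP : take k b \in P by rewrite mem_undup; apply: map_f.
by apply: main => //; apply: leq_trans jc (cnt_le_l uP).
Qed.

Lemma stepA : [/\ all (inM k.+1 d) A, uniq A, size A = size B & Ind F A B].
Proof. by split; [exact: allA | exact: uniqA | exact: sizeA | exact: IndA]. Qed.
End Step.

Lemma det_ne0 (F : fieldType) (A B : seq (seq nat)) :
  uniq B -> size A = size B -> Ind F A B -> \det (Tsub F A B) != 0.
Proof.
move=> uB sA HI; apply/negP; rewrite -det_tr => /det0P [v vn0 vT].
pose c b := \sum_(i < size B | nth [::] B i == b) v 0 i.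
have cE : forall i : 'I_(size B), c (nth [::] B i) = v 0 i.
  move=> i; rewrite /c (eq_bigl (fun j => j == i)) ?big_pred1_eq // => j.
  by rewrite nth_uniq.
have H0 := HI c.
move/negP: vn0; apply; apply/eqP/rowP => i; rewrite mxE.
rewrite -cE; apply: H0; last by apply: mem_nth.
move=> a /(nthP [::]) [j hj <-].
rewrite (big_nth [::]) big_mkord.
have hj' : (j < size B)%N by rewrite -sA.
have := congr1 (fun M : 'rV[F]_(size B) => M 0 (Ordinal hj')) vT; rewrite !mxE => e.
rewrite -[X in _ = X]e; apply: eq_bigr => k _; rewrite cE !mxE //=.
Qed.

Lemma base (F : fieldType) (charF0 : [pchar F] =i pred0) : Q F 1.
Proof.
move=> d B uB inB; rewrite /= undup_id //.
have bE : forall b, b \in B -> b = [:: head 0%N b].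
  by move=> b /(allP inB) /andP [/eqP]; case: b => [|x [|]].
pose ts := map (head 0%N) B.
have uts : uniq ts.
  rewrite map_inj_in_uniq // => b1 b2 b1B b2B e.
  by rewrite (bE _ b1B) (bE _ b2B) e.
have tsd : forall t, t \in ts -> (t <= d)%N.
  move=> t /mapP [b bB ->]; have := allP inB b bB; rewrite {1}(bE _ bB).
  by case/andP => _ /=; rewrite addn0.
have szB : (size B <= d.+1)%N.
  have := uniq_leq_size (s2 := iota 0 d.+1) uts; rewrite size_map size_iota; apply.
  by move=> t /tsd td; rewrite mem_iota.
split.
- apply/allP => a /mapP [i]; rewrite mem_iota => /andP [_ ib] ->.
  rewrite /inM /= addn0; lia.
- by rewrite map_inj_uniq ?iota_uniq // => x y [].
- by rewrite size_map size_iota.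
move=> c Hc b bB.
have V := vand charF0 uts (c := fun t => c [:: t]).
rewrite (bE _ bB); apply: V; last exact: map_f.
move=> j; rewrite size_map => jB.
rewrite -[RHS](Hc [:: j]); last by apply: map_f; rewrite mem_iota.
rewrite big_map; apply: eq_big_seq => b' b'B.
by rewrite [in RHS](bE _ b'B) /binomv /= big_seq1 /=.
Qed.

Unset Implicit Arguments.
Local Close Scope ring_scope.

Theorem lemma4p6 (F : fieldType) (charF0 : [pchar F]%R =i pred0)
  (n d : nat) (n_ge1 : (1 <= n)%N) (B : seq (seq nat))
  (B_uniq : uniq B) (B_ne : B != [::]) (B_sub : all (inM n d) B) :
  let A := Find n B in
  [/\ all (inM n d) A, uniq A, size A = size B & (\det (Tsub F A B) != 0)%R].
Proof.
move=> A.
have Qn : Q F n.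
  elim: n {A B_sub} n_ge1 => [//|[|m] IH] _; first exact: base.
  move=> d' B' uB inB; have IHk := IH isT.
  rewrite [Find _ B']/= undup_id //; exact: (stepA charF0 uB inB IHk).
have [h1 h2 h3 h4] := Qn d B B_uniq B_sub.
by split => //; apply: det_ne0.
Qed.
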